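(* Consider a rooted search tree in which every internal node has exactly $b\ge 1$ children and every leaf is at depth $d$. For each internal node $S$ and each action $A$ available at $S$, let $P_{\textrm{best}}(A\mid S)\in[0,1]$ with $\sum_{A} P_{\textrm{best}}(A\mid S)=1$ over the $b$ actions at $S$; these values become known only when $S$ is explored. Let $P_{\textrm{uni}}=1/b$. Given a set $\mathcal{E}$ of explored internal nodes, define for each leaf $\hat S$ with root-to-leaf path $S_0\xrightarrow{A_0}S_1\xrightarrow{A_1}\cdots\xrightarrow{A_{d-1}}S_d=\hat S$ $$P_{\textrm{opt}}(\hat S)=\prod_{k:\,S_k\in\mathcal{E}} P_{\textrm{best}}(A_k\mid S_k)\cdot\prod_{k:\,S_k\notin\mathcal{E},\,0\le k\le d-1} P_{\textrm{uni}} .$$ Suppose initially no node is explored, and run the greedy procedure: starting at the root, explore the current state $S$ and move along an action $A$ maximizing $P_{\textrm{best}}(A\mid S)$, repeating until a leaf is reached. Then the greedy procedure explores at most $d$ nodes, and the leaf it reaches maximizes $P_{\textrm{opt}}(\hat S)$ over all leaves $\hat S$, where $P_{\textrm{opt}}$ is computed with $\mathcal{E}$ equal to the set of nodes explored by the greedy procedure.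
   Context: A search problem is modelled as a tree whose nodes are states and edges are actions; each root-to-leaf path (leaf) is a candidate solution. $P_{\textrm{best}}(A\mid S)$ is the probability that the optimal candidate solution in the subtree rooted at $S$ lies in the subtree reached by taking action $A$ from $S$. The standing modelling assumptions are: in unexplored parts of the tree the action probabilities are taken to be uniform, equal to $P_{\textrm{uni}}=1/b$; the depth $d$ of the tree is uniform and known; the branching factor $b$ is constant and known. $P_{\textrm{opt}}(\hat S)$ is the (estimated) probability that candidate solution $\hat S$ is the optimal one. *)

(* Defs.v *)
From mathcomp Require Import all_boot all_order all_algebra.
Set Implicit Arguments. Unset Strict Implicit. Unset Printing Implicit Defensive.
Import Order.TTheory GRing.Theory Num.Theory.
Local Open Scope ring_scope.

(* Nodes of the uniform tree with branching factor b are identified with the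
   sequence of actions (elements of 'I_b) leading to them from the root.
   Internal nodes: sequences of size < d; leaves: sequences of size d. *)

Section Search.
Variables (R : realFieldType) (b : nat).

Definition Puni : R := (b%:R)^-1.

Fixpoint Popt_from (Pbest : seq 'I_b -> 'I_b -> R) (E : seq (seq 'I_b))
    (S : seq 'I_b) (l : seq 'I_b) : R :=
  match l with
  | [::] => 1
  | a :: l' => (if S \in E then Pbest S a else Puni) *
               Popt_from Pbest E (rcons S a) l'
  end.

Definition Popt Pbest E (l : seq 'I_b) : R := Popt_from Pbest E [::] l.

Fixpoint greedy (choose : seq 'I_b -> 'I_b) (n : nat) (S : seq 'I_b)
    : seq (seq 'I_b) * seq 'I_b :=
  match n with
  | 0 => ([::], S)
  | n'.+1 => let r := greedy choose n' (rcons S (choose S)) in (S :: r.1, r.2)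
  end.

End Search.

(* Main.v *)
Require Import Defs.
From mathcomp Require Import all_boot all_order all_algebra.
Import Order.TTheory GRing.Theory Num.Theory.
Local Open Scope ring_scope.

Fixpoint gp {b : nat} (choose : seq 'I_b -> 'I_b) (n : nat) (S : seq 'I_b) : seq 'I_b :=
  match n with
  | 0 => [::]
  | n'.+1 => choose S :: gp choose n' (rcons S (choose S))
  end.

Lemma greedy2 b (choose : seq 'I_b -> 'I_b) n S : (greedy choose n S).2 = S ++ gp choose n S.
Proof.
elim: n S => [|n IH] S /=; first by rewrite cats0.
by rewrite IH cat_rcons.
Qed.

Lemma greedy1_size b (choose : seq 'I_b -> 'I_b) n S : size (greedy choose n S).1 = n.
Proof. by elim: n S => [|n IH] S //=; rewrite IH. Qed.

Lemma gp_size b (choose : seq 'I_b -> 'I_b) n S : size (gp choose n S) = n.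
Proof. by elim: n S => [|n IH] S //=; rewrite IH. Qed.

Lemma greedy1_prefix b (choose : seq 'I_b -> 'I_b) n S x :
  x \in (greedy choose n S).1 -> exists q, x = S ++ q.
Proof.
elim: n S => [|n IH] S //=; rewrite inE => /orP [/eqP -> | /IH [q ->]].
  by exists [::]; rewrite cats0.
by exists (choose S :: q); rewrite cat_rcons.
Qed.

Lemma popt_off (R : realFieldType) b Pbest E (S l : seq 'I_b) :
  (forall p, (S ++ p) \notin E) -> Popt_from Pbest E S l = Puni R b ^+ size l.
Proof.
elim: l S => [|a l IH] S H //=.
have := H [::]; rewrite cats0 => /negbTE ->.
rewrite IH ?exprS // => p; by rewrite cat_rcons.
Qed.

Theorem theorem1 (R : realFieldType) (b d : nat) (hb : (1 <= b)%N)
  (Pbest : seq 'I_b -> 'I_b -> R)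
  (Pbest_ge0 : forall S A, (size S < d)%N -> 0 <= Pbest S A)
  (Pbest_sum1 : forall S, (size S < d)%N -> \sum_(A < b) Pbest S A = 1)
  (choose : seq 'I_b -> 'I_b)
  (choose_max : forall S A, (size S < d)%N -> Pbest S A <= Pbest S (choose S)) :
  let E := (greedy choose d [::]).1 in
  let leaf := (greedy choose d [::]).2 in
  (size (undup E) <= d)%N /\ size leaf = d /\
  forall l : seq 'I_b, size l = d -> Popt Pbest E l <= Popt Pbest E leaf.
Proof.
move=> E leaf.
have Pu0 : 0 <= Puni R b by rewrite /Puni invr_ge0 ler0n.
have Pulow : forall S, (size S < d)%N -> Puni R b <= Pbest S (choose S).
  move=> S hS; rewrite /Puni.
  have bpos : 0 < (b%:R : R) by rewrite ltr0n.
  rewrite -div1r ler_pdivrMr // -[X in X <= _](Pbest_sum1 _ hS).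
  have Hs : \sum_(A < b) Pbest S A <= \sum_(A < b) Pbest S (choose S).
    by apply: ler_sum => i _; exact: choose_max.
  apply: le_trans Hs _.
  by rewrite sumr_const card_ord mulr_natr.
have main : forall n S, (size S + n)%N = d ->
  (forall p, (S ++ p \in E) = (S ++ p \in (greedy choose n S).1)) ->
  Puni R b ^+ n <= Popt_from Pbest E S (gp choose n S) /\
  forall l, size l = n -> Popt_from Pbest E S l <= Popt_from Pbest E S (gp choose n S).
  elim=> [|n IH] S hS H.
    by split=> [|l /size0nil ->] /=.
  have hSd : (size S < d)%N by rewrite -hS addnS ltnS leq_addr.
  have SE : S \in E by rewrite -(cats0 S) H cats0 /= inE eqxx.
  have H' : forall p, (rcons S (choose S) ++ p \in E) =
       (rcons S (choose S) ++ p \in (greedy choose n (rcons S (choose S))).1).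
    move=> p; rewrite cat_rcons H /= inE.
    have -> : (S ++ choose S :: p == S) = false.
      apply/negbTE; apply/negP => /eqP /(congr1 size); rewrite size_cat /=.
      by move=> /eqP; rewrite -{2}(addn0 (size S)) eqn_add2l.
    by [].
  have hsz : (size (rcons S (choose S)) + n)%N = d by rewrite size_rcons addSnnS.
  have [IH1 IH2] := IH (rcons S (choose S)) hsz H'.
  split.
    rewrite /= SE exprS; apply: ler_pM => //; first by rewrite exprn_ge0.
    exact: Pulow.
  case=> [|a l] //= [hl]; rewrite SE.
  have [->|ne] := eqVneq a (choose S).
    by apply: ler_wpM2l; [apply: Pbest_ge0 | apply: IH2].
  rewrite popt_off; last first.
    move=> p; rewrite cat_rcons H /= inE negb_or; apply/andP; split.
      apply/negP => /eqP /(congr1 size); rewrite size_cat /=.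
      by move=> /eqP; rewrite -{2}(addn0 (size S)) eqn_add2l.
    apply/negP => /greedy1_prefix [q]; rewrite cat_rcons => /(congr1 (drop (size S))).
    rewrite !drop_size_cat // => -[] e _; by rewrite e eqxx in ne.
  rewrite hl; apply: ler_pM => //; [exact: Pbest_ge0 | exact: exprn_ge0 | exact: choose_max].
have [_ M] := main d [::] erefl (fun p => erefl).
split; first by apply: leq_trans (size_undup _) _; rewrite greedy1_size.
rewrite /leaf greedy2 /= gp_size; split => // l hl.
Qed.
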